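(* Let $P_7(\lambda;m,\varepsilon)$ be the seventh-order polynomial in $\lambda$ defined in the context. There exist $\upsilon_0>0$ and $\varepsilon_*>0$ such that, for all $m\in[3,7]$, all $\varepsilon\in(0,\varepsilon_* )$ and any purely imaginary root $i\upsilon$ of $P_7(\cdot;m,\varepsilon)$ with $\upsilon>0$, it holds that $0<\upsilon<\upsilon_0$.
   Context: $P_7(\lambda;m,\varepsilon)=a_0\lambda^7+a_1\lambda^6+a_2\lambda^5+a_3\lambda^4+a_4\lambda^3+a_5\lambda^2+a_6\lambda+a_7$ with $a_i=a_i(m,\varepsilon)$: $a_0=2^{11}(\varepsilon-1)^4\varepsilon^2$; $a_1=-2^{11}(\varepsilon^2-\varepsilon)^2[(5\varepsilon^2-2\varepsilon+1)m^2+2(\varepsilon+1)^2m+4]$; $a_2=(\varepsilon^2-\varepsilon)[\varepsilon(59\varepsilon^3-9\varepsilon^2+17\varepsilon-3)m^4+4\varepsilon(15\varepsilon^3+15\varepsilon^2+17\varepsilon+1)m^3+4(\varepsilon+2)(\varepsilon^3+9\varepsilon^2+5\varepsilon+1)m^2-8(2\varepsilon^3-3\varepsilon^2-4\varepsilon-3)m-8(\varepsilon-1)(\varepsilon+2)]$; $a_3=2^7[-\varepsilon^2(5\varepsilon-1)(9\varepsilon^3+\varepsilon^2+7\varepsilon-1)m^6-2\varepsilon^2(59\varepsilon^4-8\varepsilon^3+74\varepsilon^2+8\varepsilon-5)m^5-4\varepsilon(4\varepsilon^5+27\varepsilon^4+24\varepsilon^3+37\varepsilon^2+6\varepsilon-2)m^4+4\varepsilon(4\varepsilon^5+20\varepsilon^4-31\varepsilon^3-23\varepsilon^2-33\varepsilon-1)m^3+4(9\varepsilon^5+27\varepsilon^4-15\varepsilon^3-24\varepsilon^2-12\varepsilon-1)m^2+4(\varepsilon^4+17\varepsilon^3-7\varepsilon^2-9\varepsilon-2)m-4(\varepsilon-1)^2(2\varepsilon+1)]$;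 $a_4=2^3[\varepsilon^2(9\varepsilon-1)^2(\varepsilon-1)^2m^8+8\varepsilon^2(\varepsilon-1)(45\varepsilon^3+5\varepsilon^2-21\varepsilon+3)m^7+8\varepsilon(21\varepsilon^5-58\varepsilon^4-84\varepsilon^3-32\varepsilon^2+27\varepsilon-2)m^6-16\varepsilon(34\varepsilon^5+42\varepsilon^4+113\varepsilon^3+81\varepsilon^2-7\varepsilon-7)m^5-16(7\varepsilon^6+96\varepsilon^5+75\varepsilon^4+176\varepsilon^3+42\varepsilon^2-10\varepsilon-2)m^4+16\varepsilon(6\varepsilon^4-75\varepsilon^3-65\varepsilon^2-117\varepsilon-5)m^3+16(29\varepsilon^4-7\varepsilon^3-48\varepsilon^2-31\varepsilon-7)m^2+32(\varepsilon-1)(7\varepsilon^2+14\varepsilon+3)m-16(\varepsilon-1)^2]$; $a_5=2^5m[\varepsilon^2(\varepsilon-1)^2(9\varepsilon^2+\varepsilon-2)m^7+(\varepsilon^2-\varepsilon)(38\varepsilon^4+46\varepsilon^3-39\varepsilon^2+3)m^6+(36\varepsilon^6+33\varepsilon^5-123\varepsilon^4-95\varepsilon^3+54\varepsilon^2-1)m^5-(8\varepsilon^6-8\varepsilon^5+169\varepsilon^4+233\varepsilon^3+25\varepsilon^2-41\varepsilon-2)m^4-(60\varepsilon^5+110\varepsilon^4+320\varepsilon^3+129\varepsilon^2-22\varepsilon-21)m^3-4(16\varepsilon^4+37\varepsilon^3+41\varepsilon^2+7\varepsilon-5)m^2+2(4\varepsilon^3-37\varepsilon^2-10\varepsilon-5)m+4(5\varepsilon^2-2\varepsilon-3)]$;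 $a_6=2^3m[2\varepsilon^2(\varepsilon-1)^2(\varepsilon+1)(2\varepsilon-1)m^7+(\varepsilon^2-\varepsilon)(16\varepsilon^4+58\varepsilon^3-19\varepsilon^2-10\varepsilon+3)m^6+(16\varepsilon^6+72\varepsilon^5-39\varepsilon^4-171\varepsilon^3+42\varepsilon^2+17\varepsilon-1)m^5+2(20\varepsilon^5-12\varepsilon^4-113\varepsilon^3-69\varepsilon^2+41\varepsilon+5)m^4-(2\varepsilon+1)(18\varepsilon^3+81\varepsilon^2+80\varepsilon-51)m^3-4(28\varepsilon^3+31\varepsilon^2+20\varepsilon-15)m^2-4(11\varepsilon-3)(\varepsilon+1)m-8(1-\varepsilon)]$; $a_7=2^4(m^2+m^3)[\varepsilon^2(\varepsilon^2-1)(2\varepsilon-1)m^4+\varepsilon(2\varepsilon-1)(3\varepsilon^2-3\varepsilon-2)m^3+(2\varepsilon^4-13\varepsilon^2+4\varepsilon+1)m^2-3(2\varepsilon-1)(\varepsilon+1)m+2(1-2\varepsilon)]$. *)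

(* Defs.v *)
From HB Require Import structures.
From mathcomp Require Import all_boot all_order all_algebra.
From mathcomp Require Import reals.
From mathcomp Require Import complex.
Set Implicit Arguments. Unset Strict Implicit. Unset Printing Implicit Defensive.
Import Order.TTheory GRing.Theory Num.Theory.
Local Open Scope ring_scope.

Section P7def.
Variable R : realType.
Variables m e : R.

Definition a0 : R := 2^+11 * (e - 1)^+4 * e^+2.
Definition a1 : R := - 2^+11 * (e^+2 - e)^+2 *
  ((5*e^+2 - 2*e + 1) * m^+2 + 2*(e + 1)^+2 * m + 4).
Definition a2 : R := (e^+2 - e) *
  (e*(59*e^+3 - 9*e^+2 + 17*e - 3)* m^+4 + 4*e*(15*e^+3 + 15*e^+2 + 17*e + 1)* m^+3
   + 4*(e + 2)*(e^+3 + 9*e^+2 + 5*e + 1)* m^+2 - 8*(2*e^+3 - 3*e^+2 - 4*e - 3)* m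
   - 8*(e - 1)*(e + 2)).
Definition a3 : R := 2^+7 *
  (- e^+2*(5*e - 1)*(9*e^+3 + e^+2 + 7*e - 1)* m^+6
   - 2*e^+2*(59*e^+4 - 8*e^+3 + 74*e^+2 + 8*e - 5)* m^+5
   - 4*e*(4*e^+5 + 27*e^+4 + 24*e^+3 + 37*e^+2 + 6*e - 2)* m^+4
   + 4*e*(4*e^+5 + 20*e^+4 - 31*e^+3 - 23*e^+2 - 33*e - 1)* m^+3
   + 4*(9*e^+5 + 27*e^+4 - 15*e^+3 - 24*e^+2 - 12*e - 1)* m^+2
   + 4*(e^+4 + 17*e^+3 - 7*e^+2 - 9*e - 2)* m
   - 4*(e - 1)^+2*(2*e + 1)).
Definition a4 : R := 2^+3 *
  (e^+2*(9*e - 1)^+2*(e - 1)^+2* m^+8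
   + 8*e^+2*(e - 1)*(45*e^+3 + 5*e^+2 - 21*e + 3)* m^+7
   + 8*e*(21*e^+5 - 58*e^+4 - 84*e^+3 - 32*e^+2 + 27*e - 2)* m^+6
   - 16*e*(34*e^+5 + 42*e^+4 + 113*e^+3 + 81*e^+2 - 7*e - 7)* m^+5
   - 16*(7*e^+6 + 96*e^+5 + 75*e^+4 + 176*e^+3 + 42*e^+2 - 10*e - 2)* m^+4
   + 16*e*(6*e^+4 - 75*e^+3 - 65*e^+2 - 117*e - 5)* m^+3
   + 16*(29*e^+4 - 7*e^+3 - 48*e^+2 - 31*e - 7)* m^+2
   + 32*(e - 1)*(7*e^+2 + 14*e + 3)* m
   - 16*(e - 1)^+2).
Definition a5 : R := 2^+5 * m *
  (e^+2*(e - 1)^+2*(9*e^+2 + e - 2)* m^+7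
   + (e^+2 - e)*(38*e^+4 + 46*e^+3 - 39*e^+2 + 3)* m^+6
   + (36*e^+6 + 33*e^+5 - 123*e^+4 - 95*e^+3 + 54*e^+2 - 1)* m^+5
   - (8*e^+6 - 8*e^+5 + 169*e^+4 + 233*e^+3 + 25*e^+2 - 41*e - 2)* m^+4
   - (60*e^+5 + 110*e^+4 + 320*e^+3 + 129*e^+2 - 22*e - 21)* m^+3
   - 4*(16*e^+4 + 37*e^+3 + 41*e^+2 + 7*e - 5)* m^+2
   + 2*(4*e^+3 - 37*e^+2 - 10*e - 5)* m
   + 4*(5*e^+2 - 2*e - 3)).
Definition a6 : R := 2^+3 * m *
  (2*e^+2*(e - 1)^+2*(e + 1)*(2*e - 1)* m^+7
   + (e^+2 - e)*(16*e^+4 + 58*e^+3 - 19*e^+2 - 10*e + 3)* m^+6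
   + (16*e^+6 + 72*e^+5 - 39*e^+4 - 171*e^+3 + 42*e^+2 + 17*e - 1)* m^+5
   + 2*(20*e^+5 - 12*e^+4 - 113*e^+3 - 69*e^+2 + 41*e + 5)* m^+4
   - (2*e + 1)*(18*e^+3 + 81*e^+2 + 80*e - 51)* m^+3
   - 4*(28*e^+3 + 31*e^+2 + 20*e - 15)* m^+2
   - 4*(11*e - 3)*(e + 1)* m
   - 8*(1 - e)).
Definition a7 : R := 2^+4 * (m^+2 + m^+3) *
  (e^+2*(e^+2 - 1)*(2*e - 1)* m^+4
   + e*(2*e - 1)*(3*e^+2 - 3*e - 2)* m^+3
   + (2*e^+4 - 13*e^+2 + 4*e + 1)* m^+2
   - 3*(2*e - 1)*(e + 1)* m
   + 2*(1 - 2*e)).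

Definition P7 : {poly R} :=
  a0%:P * 'X^7 + a1%:P * 'X^6 + a2%:P * 'X^5 + a3%:P * 'X^4
  + a4%:P * 'X^3 + a5%:P * 'X^2 + a6%:P * 'X + a7%:P.

End P7def.

(* Main.v *)
Require Import Defs.
From HB Require Import structures.
From mathcomp Require Import all_boot all_order all_algebra.
From mathcomp Require Import reals.
From mathcomp Require Import complex.
From mathcomp Require Import ring lra.
Import Order.TTheory GRing.Theory Num.Theory.
Local Open Scope ring_scope.

Section Bounds.
Variable R : realType.

Lemma monm {m : R} : 0 <= m -> m <= 7 -> forall j : nat, (0 <= m^+j) && (m^+j <= 7^+j).
Proof.
move=> h0 h7 j; rewrite exprn_ge0 //=.
by rewrite lerXn2r // ?nnegrE // ler0n.
Qed.

Lemma mone {e m : R} : 0 <= e -> e <= 1 -> 0 <= m -> m <= 7 ->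
  forall i j : nat, (0 <= e^+i.+1 * m^+j) && (e^+i.+1 * m^+j <= 7^+j * e).
Proof.
move=> e0 e1 h0 h7 i j.
have /andP[mj0 mj7] := monm h0 h7 j.
rewrite mulr_ge0 ?exprn_ge0 //=.
rewrite exprS -mulrA mulrC; apply: ler_wpM2r => //.
apply: le_trans mj7; rewrite -[X in _ <= X]mul1r; apply: ler_wpM2r => //.
exact: exprn_ile1.
Qed.
Lemma br2_ge0 (m e : R) : 3 <= m -> m <= 7 -> 0 <= e -> 10^+9 * e <= 1 ->
 0 <= (e*(59*e^+3 - 9*e^+2 + 17*e - 3)* m^+4 + 4*e*(15*e^+3 + 15*e^+2 + 17*e + 1)* m^+3
   + 4*(e + 2)*(e^+3 + 9*e^+2 + 5*e + 1)* m^+2 - 8*(2*e^+3 - 3*e^+2 - 4*e - 3)* m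
   - 8*(e - 1)*(e + 2)).
Proof.
move=> Hm3 Hm7 He0 He.
have Hm0 : 0 <= m by lra.
have He1 : e <= 1 by lra.
have /andP[? ?] := monm Hm0 Hm7 0.
have /andP[? ?] := monm Hm0 Hm7 1.
have /andP[? ?] := monm Hm0 Hm7 2.
have /andP[? ?] := mone He0 He1 Hm0 Hm7 0 0.
have /andP[? ?] := mone He0 He1 Hm0 Hm7 0 1.
have /andP[? ?] := mone He0 He1 Hm0 Hm7 0 2.
have /andP[? ?] := mone He0 He1 Hm0 Hm7 0 3.
have /andP[? ?] := mone He0 He1 Hm0 Hm7 0 4.
have /andP[? ?] := mone He0 He1 Hm0 Hm7 1 0.
have /andP[? ?] := mone He0 He1 Hm0 Hm7 1 1.
have /andP[? ?] := mone He0 He1 Hm0 Hm7 1 2.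
have /andP[? ?] := mone He0 He1 Hm0 Hm7 1 3.
have /andP[? ?] := mone He0 He1 Hm0 Hm7 1 4.
have /andP[? ?] := mone He0 He1 Hm0 Hm7 2 1.
have /andP[? ?] := mone He0 He1 Hm0 Hm7 2 2.
have /andP[? ?] := mone He0 He1 Hm0 Hm7 2 3.
have /andP[? ?] := mone He0 He1 Hm0 Hm7 2 4.
have /andP[? ?] := mone He0 He1 Hm0 Hm7 3 2.
have /andP[? ?] := mone He0 He1 Hm0 Hm7 3 3.
have /andP[? ?] := mone He0 He1 Hm0 Hm7 3 4.
lra. Qed.
Lemma a4_ge (m e : R) : 3 <= m -> m <= 7 -> 0 <= e -> 10^+9 * e <= 1 -> 10^+4 <= a4 m e.
Proof.
move=> Hm3 Hm7 He0 He.
have Hm0 : 0 <= m by lra.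
have He1 : e <= 1 by lra.
have hb : 10240 <= 256 * m^+4 - 896 * m^+2 - 768 * m - 128.
  have ht : 0 <= m - 3 by lra.
  have := exprn_ge0 2 ht; have := exprn_ge0 3 ht; have := exprn_ge0 4 ht; lra.
rewrite /a4.
have /andP[? ?] := mone He0 He1 Hm0 Hm7 0 0.
have /andP[? ?] := mone He0 He1 Hm0 Hm7 0 1.
have /andP[? ?] := mone He0 He1 Hm0 Hm7 0 2.
have /andP[? ?] := mone He0 He1 Hm0 Hm7 0 3.
have /andP[? ?] := mone He0 He1 Hm0 Hm7 0 4.
have /andP[? ?] := mone He0 He1 Hm0 Hm7 0 5.
have /andP[? ?] := mone He0 He1 Hm0 Hm7 0 6.
have /andP[? ?] := mone He0 He1 Hm0 Hm7 1 0.
have /andP[? ?] := mone He0 He1 Hm0 Hm7 1 1.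
have /andP[? ?] := mone He0 He1 Hm0 Hm7 1 2.
have /andP[? ?] := mone He0 He1 Hm0 Hm7 1 3.
have /andP[? ?] := mone He0 He1 Hm0 Hm7 1 4.
have /andP[? ?] := mone He0 He1 Hm0 Hm7 1 5.
have /andP[? ?] := mone He0 He1 Hm0 Hm7 1 6.
have /andP[? ?] := mone He0 He1 Hm0 Hm7 1 7.
have /andP[? ?] := mone He0 He1 Hm0 Hm7 1 8.
have /andP[? ?] := mone He0 He1 Hm0 Hm7 2 1.
have /andP[? ?] := mone He0 He1 Hm0 Hm7 2 2.
have /andP[? ?] := mone He0 He1 Hm0 Hm7 2 3.
have /andP[? ?] := mone He0 He1 Hm0 Hm7 2 4.
have /andP[? ?] := mone He0 He1 Hm0 Hm7 2 5.
have /andP[? ?] := mone He0 He1 Hm0 Hm7 2 6.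
have /andP[? ?] := mone He0 He1 Hm0 Hm7 2 7.
have /andP[? ?] := mone He0 He1 Hm0 Hm7 2 8.
have /andP[? ?] := mone He0 He1 Hm0 Hm7 3 2.
have /andP[? ?] := mone He0 He1 Hm0 Hm7 3 3.
have /andP[? ?] := mone He0 He1 Hm0 Hm7 3 4.
have /andP[? ?] := mone He0 He1 Hm0 Hm7 3 5.
have /andP[? ?] := mone He0 He1 Hm0 Hm7 3 6.
have /andP[? ?] := mone He0 He1 Hm0 Hm7 3 7.
have /andP[? ?] := mone He0 He1 Hm0 Hm7 3 8.
have /andP[? ?] := mone He0 He1 Hm0 Hm7 4 3.
have /andP[? ?] := mone He0 He1 Hm0 Hm7 4 4.
have /andP[? ?] := mone He0 He1 Hm0 Hm7 4 5.
have /andP[? ?] := mone He0 He1 Hm0 Hm7 4 6.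
have /andP[? ?] := mone He0 He1 Hm0 Hm7 4 7.
have /andP[? ?] := mone He0 He1 Hm0 Hm7 4 8.
have /andP[? ?] := mone He0 He1 Hm0 Hm7 5 4.
have /andP[? ?] := mone He0 He1 Hm0 Hm7 5 5.
have /andP[? ?] := mone He0 He1 Hm0 Hm7 5 6.
have /andP[? ?] := mone He0 He1 Hm0 Hm7 5 7.
have /andP[? ?] := mone He0 He1 Hm0 Hm7 5 8.
lra. Qed.
Lemma a6_le (m e : R) : 3 <= m -> m <= 7 -> 0 <= e -> 10^+9 * e <= 1 -> a6 m e <= 10^+7.
Proof.
move=> Hm3 Hm7 He0 He.
have Hm0 : 0 <= m by lra.
have He1 : e <= 1 by lra.
rewrite /a6.
have /andP[? ?] := monm Hm0 Hm7 1.
have /andP[? ?] := monm Hm0 Hm7 2.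
have /andP[? ?] := monm Hm0 Hm7 3.
have /andP[? ?] := monm Hm0 Hm7 4.
have /andP[? ?] := monm Hm0 Hm7 5.
have /andP[? ?] := monm Hm0 Hm7 6.
have /andP[? ?] := mone He0 He1 Hm0 Hm7 0 1.
have /andP[? ?] := mone He0 He1 Hm0 Hm7 0 2.
have /andP[? ?] := mone He0 He1 Hm0 Hm7 0 3.
have /andP[? ?] := mone He0 He1 Hm0 Hm7 0 4.
have /andP[? ?] := mone He0 He1 Hm0 Hm7 0 5.
have /andP[? ?] := mone He0 He1 Hm0 Hm7 0 6.
have /andP[? ?] := mone He0 He1 Hm0 Hm7 0 7.
have /andP[? ?] := mone He0 He1 Hm0 Hm7 1 2.
have /andP[? ?] := mone He0 He1 Hm0 Hm7 1 3.
have /andP[? ?] := mone He0 He1 Hm0 Hm7 1 4.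
have /andP[? ?] := mone He0 He1 Hm0 Hm7 1 5.
have /andP[? ?] := mone He0 He1 Hm0 Hm7 1 6.
have /andP[? ?] := mone He0 He1 Hm0 Hm7 1 7.
have /andP[? ?] := mone He0 He1 Hm0 Hm7 1 8.
have /andP[? ?] := mone He0 He1 Hm0 Hm7 2 3.
have /andP[? ?] := mone He0 He1 Hm0 Hm7 2 4.
have /andP[? ?] := mone He0 He1 Hm0 Hm7 2 5.
have /andP[? ?] := mone He0 He1 Hm0 Hm7 2 6.
have /andP[? ?] := mone He0 He1 Hm0 Hm7 2 7.
have /andP[? ?] := mone He0 He1 Hm0 Hm7 2 8.
have /andP[? ?] := mone He0 He1 Hm0 Hm7 3 4.
have /andP[? ?] := mone He0 He1 Hm0 Hm7 3 5.
have /andP[? ?] := mone He0 He1 Hm0 Hm7 3 6.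
have /andP[? ?] := mone He0 He1 Hm0 Hm7 3 7.
have /andP[? ?] := mone He0 He1 Hm0 Hm7 3 8.
have /andP[? ?] := mone He0 He1 Hm0 Hm7 4 5.
have /andP[? ?] := mone He0 He1 Hm0 Hm7 4 6.
have /andP[? ?] := mone He0 He1 Hm0 Hm7 4 7.
have /andP[? ?] := mone He0 He1 Hm0 Hm7 4 8.
have /andP[? ?] := mone He0 He1 Hm0 Hm7 5 6.
have /andP[? ?] := mone He0 He1 Hm0 Hm7 5 7.
have /andP[? ?] := mone He0 He1 Hm0 Hm7 5 8.
lra. Qed.


Local Open Scope complex_scope.
Lemma mulcE (a b c d : R) : (a +i* b) * (c +i* d) = (a*c - b*d) +i* (a*d + b*c).
Proof. by []. Qed.
Lemma addcE (a b c d : R) : (a +i* b) + (c +i* d) = (a+c) +i* (b+d).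
Proof. by []. Qed.
Lemma rcE (a : R) : a%:C = a +i* 0.
Proof. by []. Qed.

Lemma evalP (u b0 b1 b2 b3 b4 b5 b6 b7 : R) (z : R[i]) : z = 'i * u%:C ->
  b0%:C * z^+7 + b1%:C * z^+6 + b2%:C * z^+5 + b3%:C * z^+4 + b4%:C * z^+3 + b5%:C * z^+2 + b6%:C * z + b7%:C
  = (b7 - b5*u^+2 + b3*u^+4 - b1*u^+6) +i* (b6*u - b4*u^+3 + b2*u^+5 - b0*u^+7).
Proof.
move=> zE.
have z1 : z = 0 +i* u by rewrite zE rcE mulcE; congr (_ +i* _); ring.
have z2 : z^+2 = (- u^+2) +i* 0 by rewrite expr2 z1 mulcE; congr (_ +i* _); ring.
have z3 : z^+3 = 0 +i* (- u^+3) by rewrite exprS z2 z1 mulcE; congr (_ +i* _); ring.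
have z4 : z^+4 = u^+4 +i* 0 by rewrite exprS z3 z1 mulcE; congr (_ +i* _); ring.
have z5 : z^+5 = 0 +i* u^+5 by rewrite exprS z4 z1 mulcE; congr (_ +i* _); ring.
have z6 : z^+6 = (- u^+6) +i* 0 by rewrite exprS z5 z1 mulcE; congr (_ +i* _); ring.
have z7 : z^+7 = 0 +i* (- u^+7) by rewrite exprS z6 z1 mulcE; congr (_ +i* _); ring.
rewrite z7 z6 z5 z4 z3 z2 z1 !rcE !mulcE !addcE; congr (_ +i* _); ring.
Qed.

Lemma mapCX (c : R) (n : nat) :
  map_poly (real_complex R) (c%:P * 'X^n) = (c%:C)%:P * 'X^n.
Proof. by rewrite rmorphM /= map_polyC map_polyXn. Qed.
Lemma mapCX1 (c : R) :
  map_poly (real_complex R) (c%:P * 'X) = (c%:C)%:P * 'X.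
Proof. by rewrite rmorphM /= map_polyC map_polyX. Qed.

Lemma hCX (c x : R[i]) (n : nat) : (c%:P * 'X^n).[x] = c * x^+n.
Proof. by rewrite hornerCM ?hornerXn ?hornerX. Qed.
Lemma hCX1 (c x : R[i]) : (c%:P * 'X).[x] = c * x.
Proof. by rewrite hornerCM ?hornerXn ?hornerX. Qed.

Lemma mapP (u b0 b1 b2 b3 b4 b5 b6 b7 : R) :
  root (map_poly (real_complex R) (b0%:P * 'X^7 + b1%:P * 'X^6 + b2%:P * 'X^5 + b3%:P * 'X^4
  + b4%:P * 'X^3 + b5%:P * 'X^2 + b6%:P * 'X + b7%:P)) ((Complex 0 1) * (u%:C)%C) ->
  b6 * u - b4 * u^+3 + b2 * u^+5 - b0 * u^+7 = 0.
Proof.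
rewrite /root !rmorphD /= !mapCX mapCX1 map_polyC !hornerD !hCX hCX1 hornerC.
rewrite (evalP _ _ _ _ _ _ _ _ _ _ (erefl _)) => /eqP.
by case.
Qed.

Lemma imag_root (m e u : R) :
  root (map_poly (real_complex R) (P7 m e)) ((Complex 0 1) * (u%:C)%C) ->
  a6 m e * u - a4 m e * u^+3 + a2 m e * u^+5 - a0 e * u^+7 = 0.
Proof. exact: mapP. Qed.
End Bounds.

Theorem lemma5p2 (R : realType) :
  exists (ups0 eps_star : R), 0 < ups0 /\ 0 < eps_star /\
    forall (m eps ups : R),
      3 <= m <= 7 -> 0 < eps < eps_star -> 0 < ups ->
      root (map_poly (real_complex R) (P7 m eps)) ((Complex 0 1) * (ups%:C)%C) ->
      0 < ups < ups0.
Proof.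
have hp : (0 : R) < 10^+9 by rewrite exprn_gt0 // ltr0n.
exists (10^+3 + 1), ((10^+9)^-1); split; first lra.
split; first by rewrite invr_gt0.
move=> m e u /andP[Hm3 Hm7] /andP[He0 He] Hu Hroot.
have He' : 10^+9 * e <= 1.
  have := He; rewrite -(ltr_pM2l hp) mulfV ?gt_eqF // => h; lra.
have He0' : 0 <= e by lra.
have h4 := @a4_ge R m e Hm3 Hm7 He0' He'.
have h6 := @a6_le R m e Hm3 Hm7 He0' He'.
have hb := @br2_ge0 R m e Hm3 Hm7 He0' He'.
have h2 : a2 m e <= 0.
  have : e^+2 - e <= 0 by nra.
  by rewrite /a2 => h; apply: mulr_le0_ge0.
have h0 : 0 <= a0 e.
  rewrite /a0; have := sqr_ge0 ((e-1)^+2 * e); lra.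
have hr := @imag_root R m e u Hroot.
set U := u^+2.
have hU : 0 <= U by rewrite /U sqr_ge0.
have eq' : a6 m e - a4 m e * U + a2 m e * U^+2 - a0 e * U^+3 = 0.
  have : u * (a6 m e - a4 m e * U + a2 m e * U^+2 - a0 e * U^+3) = 0.
    rewrite -hr /U; ring.
  by move/eqP; rewrite mulf_eq0 gt_eqF //= => /eqP.
have t2 : a2 m e * U^+2 <= 0 by apply: mulr_le0_ge0 => //; exact: exprn_ge0.
have t0 : 0 <= a0 e * U^+3 by apply: mulr_ge0 => //; exact: exprn_ge0.
have t4 : 10^+4 * U <= a4 m e * U by apply: ler_wpM2r.
have hU3 : U <= 10^+3 by lra.
apply/andP; split => //.
rewrite /U in hU3.
have [hu1|hu1] := lerP u 1; first lra.
have : u < u^+2 by rewrite expr2 -[X in X < _]mulr1 ltr_pM2l.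
lra.
Qed.
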